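(* Let $N\ge 2$ and let $s_0,\dots,s_{N-1}$ be independent complex random variables with $\mathbb{E}[s_n]=0$, $\mathbb{E}[|s_n|^2]=1$ and kurtosis $\mu_{4,n}=\mathbb{E}[|s_n|^4]$ (finite). Let $P_0,\dots,P_{N-1}\ge 0$ be deterministic, $\mathbf P=\mathrm{diag}(\sqrt{P_0},\dots,\sqrt{P_{N-1}})$, $\mathbf s=[s_0,\dots,s_{N-1}]^T$, and $\mathbf x=\mathbf F_N^H\mathbf P\mathbf s$, where $\mathbf F_N$ is the unitary $N$-point DFT matrix, i.e. $x[t]=\frac{1}{\sqrt N}\sum_{n=0}^{N-1}\sqrt{P_n}\,s_n e^{j\frac{2\pi}{N}tn}$, $t=0,\dots,N-1$. For $k=0,\dots,N-1$ let $$\mathbf J_k=\begin{bmatrix}\mathbf 0_{(N-k)\times k} & \mathbf I_{N-k}\\ \mathbf I_k & \mathbf 0_{k\times(N-k)}\end{bmatrix}$$ be the $N\times N$ cyclic shift matrix and $r_k=\mathbf x^H\mathbf J_k\mathbf x$. Define the expected sidelobe level $\mathrm{ESL}=\frac{1}{N-1}\sum_{k=1}^{N-1}\mathbb{E}[|r_k|^2]$. Then $$\mathrm{ESL}=\frac{1}{N-1}\left(\sum_{n=0}^{N-1}\big[(N-1)\mu_{4,n}+1\big]P_n^2-\Big(\sum_{n=0}^{N-1}P_n\Big)^2\right).$$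
   Context: Here $\mathbf x$ is a single OFDM symbol with $N$ subcarriers, $s_n$ is the (random) data symbol on subcarrier $n$ drawn from some constellation, $P_n$ the power on subcarrier $n$, and $r_k$ the periodic autocorrelation of $\mathbf x$ at lag $k$. *)

(* Defs.v *)
From HB Require Import structures.
From mathcomp Require Import all_boot all_order all_algebra.
From mathcomp Require Import all_classical all_reals all_analysis.
From mathcomp Require Import complex.
Set Implicit Arguments. Unset Strict Implicit. Unset Printing Implicit Defensive.
Import Order.TTheory GRing.Theory Num.Theory.
Local Open Scope ring_scope.
Local Open Scope classical_set_scope.


Definition expj (R : realType) (theta : R) : R[i] := (cos theta +i* sin theta)%C.

Definition cabs2 (R : realType) (z : R[i]) : R := Normc.normc z ^+ 2.

Definition dftmx (R : realType) (N : nat) : 'M[R[i]]_N :=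
  \matrix_(t, n)
    (((Num.sqrt (N%:R : R))^-1)%:C%C
       * expj (- (2 * pi * ((t : nat)%:R * (n : nat)%:R) / N%:R))).

Definition ctrmx (R : realType) m n (A : 'M[R[i]]_(m, n)) : 'M[R[i]]_(n, m) :=
  (map_mx (@conjc R) A)^T.

(* N x N cyclic shift matrix J_k = [[0_{(N-k) x k}, I_{N-k}], [I_k, 0_{k x (N-k)}]],
   written entrywise: (J_k)_{i j} = 1 iff j = (i + k) mod N. *)
Definition shiftmx (R : realType) (N k : nat) : 'M[R[i]]_N :=
  \matrix_(i, j) (((j : nat) == (i + k) %% N)%N)%:R.

Definition powmx (R : realType) (N : nat) (Pw : 'I_N -> R) : 'M[R[i]]_N :=
  diag_mx (\row_n (Num.sqrt (Pw n))%:C%C).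

Definition ofdm_symbol d (T : measurableType d) (R : realType) (N : nat)
  (Pw : 'I_N -> R) (s : 'I_N -> T -> R[i]) (w : T) : 'cV[R[i]]_N :=
  ctrmx (dftmx R N) *m powmx Pw *m (\col_n s n w).

Definition autocorr (R : realType) (N : nat) (x : 'cV[R[i]]_N) (k : nat) : R[i] :=
  (ctrmx x *m shiftmx R N k *m x) ord0 ord0.

(* Mutual independence of complex random variables s_0, ..., s_{N-1}:
   product rule on the generating pi-system of measurable rectangles
   {Re s_n in A_n, Im s_n in B_n} (taking A_n = B_n = setT recovers subfamilies). *)
Definition cindependent d (T : measurableType d) (R : realType)
  (P : probability T R) (N : nat) (s : 'I_N -> T -> R[i]) : Prop :=
  forall A B : 'I_N -> set R,
    (forall n, measurable (A n)) -> (forall n, measurable (B n)) ->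
    P (\bigcap_(n in [set: 'I_N]) [set w : T | A n (complex.Re (s n w)) /\ B n (complex.Im (s n w))])
    = (\prod_(n < N) P [set w : T | A n (complex.Re (s n w)) /\ B n (complex.Im (s n w))])%E.

(* Main.v *)
From HB Require Import structures.
From mathcomp Require Import all_boot all_order all_algebra.
From mathcomp Require Import all_classical all_reals all_analysis.
From mathcomp Require Import complex measurable_realfun.
From mathcomp Require Import ring lra.
Require Import Defs.
Import Order.TTheory GRing.Theory Num.Theory.
Local Open Scope ring_scope.

Local Open Scope classical_set_scope.

Definition selc {R : realType} (f : bool) (z : R[i]) := if f then complex.Re z else complex.Im z.

Section indep.
Context d (T : measurableType d) (R : realType) (P : probability T R).
Local Open Scope ereal_scope.

Lemma indep_sq (U V : T -> R) (mU : measurable_fun setT U) (mV : measurable_fun setT V) :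
  (forall A B, measurable A -> measurable B ->
     P (U @^-1` A `&` V @^-1` B) = P (U @^-1` A) * P (V @^-1` B)) ->
  \int[P]_w ((U w ^+ 2 * V w ^+ 2)%R)%:E =
  \int[P]_w ((U w ^+ 2)%R)%:E * \int[P]_w ((V w ^+ 2)%R)%:E.
Proof.
move=> ind.
pose Up : {mfun T >-> R} := HB.pack U (isMeasurableFun.Build _ _ _ _ _ mU).
pose Vp : {mfun T >-> R} := HB.pack V (isMeasurableFun.Build _ _ _ _ _ mV).
have mZ : measurable_fun setT (fun w => (U w, V w)) by exact: measurable_fun_pair.
pose Zp : {mfun T >-> (R * R)%type} := HB.pack (fun w => (U w, V w)) (isMeasurableFun.Build _ _ _ _ _ mZ).
pose m1 := distribution P Up.
pose m2 := distribution P Vp.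
have mh : measurable_fun [set: R * R] (EFin \o (fun z : R * R => (z.1 ^+ 2 * z.2 ^+ 2)%R)).
  apply/measurable_EFinP; apply: measurable_funM; apply: measurable_funX.
  exact: measurable_fst. exact: measurable_snd.
have h0 : forall z : R * R, 0 <= ((z.1 ^+ 2 * z.2 ^+ 2)%R)%:E.
  by move=> z; rewrite lee_fin mulr_ge0 // sqr_ge0.
have E1 : \int[P]_w ((U w ^+ 2 * V w ^+ 2)%R)%:E =
   \int[distribution P Zp]_z ((z.1 ^+ 2 * z.2 ^+ 2)%R)%:E.
  rewrite /distribution ge0_integral_pushforward //.
have E2 : \int[distribution P Zp]_z ((z.1 ^+ 2 * z.2 ^+ 2)%R)%:E =
   \int[m1 \x m2]_z ((z.1 ^+ 2 * z.2 ^+ 2)%R)%:E.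
  apply: eq_measure_integral => A mA _.
  symmetry. apply: (@product_measure_unique _ _ _ _ _ m1 m2) => // A1 B1 mA1 mB1.
rewrite E1 E2 fubini_tonelli1 //.
have sq0 : forall x : R, 0 <= ((x ^+ 2)%R)%:E by move=> x; rewrite lee_fin sqr_ge0.
have msq : measurable_fun [set: R] (fun x : R => ((x ^+ 2)%R)%:E).
  by apply/measurable_EFinP; apply: measurable_funX.
rewrite /fubini_F /=.
under eq_integral => x _.
  under eq_integral => y _ do rewrite EFinM.
  rewrite ge0_integralZl_EFin //; last exact: sqr_ge0.
  over.
rewrite ge0_integralZr //; last by apply: integral_ge0 => y _.
rewrite /m1 /m2 /distribution !ge0_integral_pushforward //= !preimage_setT //.
Qed.
End indep.

Section cind.
Context d (T : measurableType d) (R : realType) (P : probability T R) (N : nat)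
  (s : 'I_N -> T -> R[i]).
Hypothesis ind : cindependent P s.
Local Open Scope ereal_scope.

Let S (A B : set R) n := [set w : T | A (complex.Re (s n w)) /\ B (complex.Im (s n w))].

Lemma cind_pair (a b : 'I_N) (ab : a != b) (Aa Ba Ab Bb : set R) :
  measurable Aa -> measurable Ba -> measurable Ab -> measurable Bb ->
  P (S Aa Ba a `&` S Ab Bb b) = P (S Aa Ba a) * P (S Ab Bb b).
Proof.
move=> mAa mBa mAb mBb.
pose A' n := if n == a then Aa else if n == b then Ab else setT.
pose B' n := if n == a then Ba else if n == b then Bb else setT.
have mA' : forall n, measurable (A' n).
  by move=> n; rewrite /A'; case: ifP => _; [|case: ifP => _].
have mB' : forall n, measurable (B' n).
  by move=> n; rewrite /B'; case: ifP => _; [|case: ifP => _].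
have := @ind A' B' mA' mB'.

have ba : (b == a) = false by apply/negbTE; rewrite eq_sym.
have Sa : S (A' a) (B' a) a = S Aa Ba a by rewrite /A' /B' eqxx.
have Sb : S (A' b) (B' b) b = S Ab Bb b by rewrite /A' /B' ba eqxx.
have -> : \bigcap_(n in [set: 'I_N]) [set w : T | A' n (complex.Re (s n w)) /\ B' n (complex.Im (s n w))]
   = S Aa Ba a `&` S Ab Bb b.
  apply/seteqP; split => w.
    by move=> H; split; [rewrite -Sa; exact: (H a)|rewrite -Sb; exact: (H b)].
  move=> [Ha Hb] n _ /=; rewrite /A' /B'.
  case: ifP => [/eqP -> //|_]; case: ifP => [/eqP -> //|_]; by [].
move=> ->.
have H1 : \prod_(n < N | (n != a) && (n != b))
    P [set w : T | A' n (complex.Re (s n w)) /\ B' n (complex.Im (s n w))] = 1.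
  rewrite big1 // => n /andP[na nb].
  rewrite /A' /B' (negbTE na) (negbTE nb).
  have -> : [set w : T | [set: R] (complex.Re (s n w)) /\ [set: R] (complex.Im (s n w))] = setT.
    by apply/seteqP; split => w.
  exact: probability_setT.
rewrite (bigD1 a) //= (bigD1 b) //=.
transitivity (P (S Aa Ba a) * (P (S Ab Bb b) * 1)); last by rewrite mule1.
congr (_ * (_ * _)); [by rewrite -Sa|by rewrite -Sb|].
  exact: H1.
by rewrite eq_sym.
Qed.


Lemma cind_pair2 (a b : 'I_N) (ab : a != b) (fa fb : bool) (A B : set R) :
  measurable A -> measurable B ->
  P ((fun w => selc fa (s a w)) @^-1` A `&` (fun w => selc fb (s b w)) @^-1` B) =
  P ((fun w => selc fa (s a w)) @^-1` A) * P ((fun w => selc fb (s b w)) @^-1` B).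
Proof.
move=> mA mB.
have E : forall (f : bool) (c : 'I_N) (X : set R), (fun w => selc f (s c w)) @^-1` X = S (if f then X else setT) (if f then setT else X) c.
  move=> f c X; rewrite /S /selc; apply/seteqP; split => w; case: f => /=.
  - by move=> ?; split.
  - by move=> ?; split.
  - by case.
  - by case.
rewrite !E cind_pair //; by [case: fa|case: fb].
Qed.
End cind.

Section expect.
Context d (T : measurableType d) (R : realType) (P : probability T R) (N : nat)
  (s : 'I_N -> T -> R[i]).
Hypothesis mRe : forall n, measurable_fun setT (fun w => complex.Re (s n w)).
Hypothesis mIm : forall n, measurable_fun setT (fun w => complex.Im (s n w)).
Hypothesis ind : cindependent P s.
Hypothesis Eu : forall n, ('E_P[(fun w => cabs2 (s n w))%R] = 1)%E.
Local Open Scope ereal_scope.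

Lemma cabs2_sel (z : R[i]) : cabs2 z = (selc true z ^+ 2 + selc false z ^+ 2)%R.
Proof. by case: z => a b; rewrite /cabs2 /selc /= sqr_sqrtr // addr_ge0 // sqr_ge0. Qed.

Lemma msel f n : measurable_fun setT (fun w => selc f (s n w)).
Proof. by case: f; [exact: mRe|exact: mIm]. Qed.

Lemma intD (f g : T -> R) : measurable_fun setT f -> measurable_fun setT g ->
  (forall w, (0 <= f w)%R) -> (forall w, (0 <= g w)%R) ->
  \int[P]_w ((f w + g w)%R)%:E = \int[P]_w (f w)%:E + \int[P]_w (g w)%:E.
Proof.
move=> mf mg f0 g0; under eq_integral do rewrite EFinD.
by rewrite ge0_integralD //; [move=> w _; rewrite lee_fin|exact/measurable_EFinP|move=> w _; rewrite lee_fin|exact/measurable_EFinP].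
Qed.

Lemma E_uab (a b : 'I_N) : a != b ->
  \int[P]_w ((cabs2 (s a w) * cabs2 (s b w))%R)%:E = 1.
Proof.
move=> ab.
have E1 : forall fa fb, \int[P]_w ((selc fa (s a w) ^+ 2 * selc fb (s b w) ^+ 2)%R)%:E =
   \int[P]_w ((selc fa (s a w) ^+ 2)%R)%:E * \int[P]_w ((selc fb (s b w) ^+ 2)%R)%:E.
  move=> fa fb; apply: indep_sq; [exact: msel|exact: msel|].
  by move=> A B mA mB; apply: cind_pair2.
have Eu' : forall c, \int[P]_w ((selc true (s c w) ^+ 2)%R)%:E + \int[P]_w ((selc false (s c w) ^+ 2)%R)%:E = 1.
  move=> c; rewrite -intD; [|exact/measurable_funX/msel|exact/measurable_funX/msel|move=> w; exact: sqr_ge0|move=> w; exact: sqr_ge0].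
  by move: (Eu c); rewrite unlock; under eq_integral do rewrite cabs2_sel.
have sq0 : forall (f : bool) (c : 'I_N), 0 <= \int[P]_w ((selc f (s c w) ^+ 2)%R)%:E.
  by move=> f c; apply: integral_ge0 => w _; rewrite lee_fin sqr_ge0.
under eq_integral do rewrite !cabs2_sel mulrDl !mulrDr.
have mq : forall fa fb, measurable_fun setT (fun w => (selc fa (s a w) ^+ 2 * selc fb (s b w) ^+ 2)%R).
  by move=> fa fb; apply: measurable_funM; apply/measurable_funX/msel.
have q0 : forall fa fb w, (0 <= selc fa (s a w) ^+ 2 * selc fb (s b w) ^+ 2)%R.
  by move=> fa fb w; rewrite mulr_ge0 // sqr_ge0.
rewrite intD; first last.
- by move=> w; rewrite addr_ge0.
- by move=> w; rewrite addr_ge0.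
- exact: measurable_funD.
- exact: measurable_funD.
rewrite !intD //.
rewrite !E1 -!ge0_muleDr // -ge0_muleDl // ?adde_ge0 //.
by rewrite !Eu' mule1.
Qed.
End expect.

Local Open Scope complex_scope.
Section alg.
Variable R : realType.
Local Notation C := (R[i]).

Lemma expjD (a b : R) : expj (a + b) = expj a * expj b.
Proof. rewrite /expj cosD sinD /=. congr (_ +i* _); ring. Qed.

Lemma expj0 : expj (0 : R) = 1.
Proof. by rewrite /expj cos0 sin0. Qed.

Lemma expj_nat (m : nat) (t : R) : expj (m%:R * t) = expj t ^+ m.
Proof.
elim: m => [|m IH]; first by rewrite mul0r expj0 expr0.
by rewrite -addn1 natrD mulrDl expjD IH mul1r exprD expr1.
Qed.

Lemma expjN (t : R) : expj (- t) = conjc (expj t).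
Proof. by rewrite /expj cosN sinN. Qed.

Lemma expjJ (t : R) : expj t * conjc (expj t) = 1.
Proof.
rewrite /expj /=. apply/eqP; rewrite eq_complex /=; apply/andP; split; apply/eqP.
  by rewrite -(cos2Dsin2 t); ring.
by ring.
Qed.

Lemma conjcK' (z : C) : conjc (conjc z) = z.
Proof. exact: conjcK. Qed.

Lemma conjcM' (a b : C) : conjc (a * b) = conjc a * conjc b.
Proof. exact: rmorphM. Qed.

Lemma conjc_sum' (I : finType) (F : I -> C) : conjc (\sum_i F i) = \sum_i conjc (F i).
Proof. exact: rmorph_sum. Qed.

Lemma cabs2E (z : C) : (cabs2 z)%:C = z * conjc z.
Proof.
case: z => a b; rewrite /cabs2 /= sqr_sqrtr ?addr_ge0 ?sqr_ge0 //.
by congr (_ +i* _); ring.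
Qed.

Variable N : nat.
Hypothesis N0 : (0 < N)%N.
Local Notation om := (expj (2 * pi / (N%:R : R))).

Lemma Nne0 : (N%:R : R) != 0.
Proof. by rewrite pnatr_eq0 -lt0n. Qed.

Lemma omN : om ^+ N = 1.
Proof.
rewrite -expj_nat mulrCA divff ?Nne0 // mulr1 /expj.
by rewrite mulr_natl cos2pi sin2pi.
Qed.

Lemma om_mod m : om ^+ m = om ^+ (m %% N).
Proof. by rewrite {1}(divn_eq m N) exprD mulnC exprM omN expr1n mul1r. Qed.

Lemma om_neq1 j : (0 < j < N)%N -> om ^+ j != 1.
Proof.
move=> /andP[j0 jN]; apply/negP => /eqP H.
pose phi := (j%:R * pi / N%:R : R).
have Hphi : 0 < phi < pi.
  have Np : (0 : R) < N%:R by rewrite ltr0n.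
  apply/andP; split.
    by rewrite /phi divr_gt0 // mulr_gt0 // ?pi_gt0 // ltr0n.
  rewrite /phi ltr_pdivrMr // mulrC ltr_pM2l ?pi_gt0 // ltr_nat //.
have sphi := sin_gt0_pi Hphi.
have : expj (phi *+ 2) = 1.
  rewrite -H -expj_nat; congr expj; rewrite /phi -mulr_natr; field.
  exact: Nne0.
rewrite /expj => -[] c1 _.
rewrite cos_mulr2n in c1.
have : sin phi ^+ 2 = 0 by rewrite sin2cos2; rewrite -mulr_natr in c1; lra.
by move/eqP; rewrite sqrf_eq0 => /eqP sp; rewrite sp ltxx in sphi.
Qed.

Lemma om_ne0 : om != 0.
Proof.
apply/negP => /eqP H; have := expjJ (2 * pi / N%:R); rewrite H mul0r => /eqP.
by rewrite eq_sym oner_eq0.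
Qed.

Lemma conj_om : conjc om = om ^+ N.-1.
Proof.
apply: (mulfI om_ne0); rewrite expjJ -exprS prednK //; by rewrite omN.
Qed.

Lemma conj_omX m : conjc (om ^+ m) = om ^+ (N.-1 * m).
Proof.
have -> : conjc (om ^+ m) = (conjc om) ^+ m by rewrite rmorphXn.
by rewrite conj_om -exprM.
Qed.

Lemma orth m : \sum_(i < N) om ^+ (i * m) = if (m %% N == 0)%N then (N%:R : C) else 0.
Proof.
have -> : \sum_(i < N) om ^+ (i * m) = \sum_(i < N) (om ^+ m) ^+ i.
  by apply: eq_bigr => i _; rewrite -exprM mulnC.
case: ifP => Hm.
  rewrite om_mod (eqP Hm) expr0.
  by under eq_bigr do rewrite expr1n; rewrite sumr_const card_ord.
have z1 : om ^+ m - 1 != 0.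
  rewrite subr_eq0 om_mod; apply: om_neq1.
  by rewrite lt0n Hm ltn_pmod.
apply/eqP; rewrite -(mulIr_eq0 _ (mulIf z1)) mulrC -subrX1 -exprM mulnC exprM omN.
by rewrite expr1n subrr.
Qed.

Lemma orth_idx (a b : 'I_N) : ((N.-1 * a + b) %% N == 0)%N = (a == b).
Proof.
have Na : forall x : nat, (N.-1 * x + x = N * x)%N.
  by move=> x; rewrite -{2}[x]mul1n -mulnDl addn1 prednK.
apply/idP/idP; last first.
  by move=> /eqP ->; rewrite Na modnMr.
move=> /eqP H.
have : (((N.-1 * a + b) + a) %% N = a %% N)%N by rewrite -modnDml H.
rewrite -addnA [(b + a)%N]addnC addnA Na [(N * a)%N]mulnC modnMDl !modn_small //.
by move=> /eqP; rewrite eq_sym.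
Qed.

Local Notation cN := (((Num.sqrt (N%:R : R))^-1)%:C : C).

Lemma dft_conj (t n : 'I_N) : conjc (dftmx R N n t) = cN * om ^+ (n * t).
Proof.
rewrite /dftmx mxE -expj_nat.
have -> : ((n * t)%:R * (2 * pi / N%:R) : R) = 2 * pi * (n%:R * t%:R) / N%:R.
  rewrite natrM; field; exact: Nne0.
rewrite /expj /= cosN sinN; congr (_ +i* _); ring.
Qed.

Variables (d : measure_display) (T : measurableType d) (Pw : 'I_N -> R) (s : 'I_N -> T -> C) (w : T).

Lemma ofdm_entry (t : 'I_N) : ofdm_symbol Pw s w t ord0 =
  \sum_(n < N) cN * om ^+ (n * t) * (Num.sqrt (Pw n))%:C * s n w.
Proof.
rewrite /ofdm_symbol /powmx mul_mx_diag !mxE; apply: eq_bigr => n _.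
by rewrite !mxE /ctrmx -dft_conj /dftmx mxE.
Qed.

Lemma autocorr_shift (x : 'cV[C]_N) k : autocorr x k =
  \sum_(i < N) conjc (x i ord0) * x (Ordinal (ltn_pmod (i + k) N0)) ord0.
Proof.
rewrite /autocorr !mxE.
under eq_bigr do rewrite !mxE mulr_suml.
rewrite exchange_big /=; apply: eq_bigr => i _.
rewrite (bigD1 (Ordinal (ltn_pmod (i + k) N0))) //= big1 ?addr0.
  by rewrite /ctrmx !mxE eqxx mulr1.
move=> j /negbTE jn; rewrite !mxE.
have -> : (nat_of_ord j == ((i + k) %% N))%N = false.
  by apply/negbTE; apply: contraFN jn => /eqP H; apply/eqP/val_inj.
by rewrite mulr0 mul0r.
Qed.

Hypothesis P0 : forall n, 0 <= Pw n.

Lemma conj_term m (z : C) (p : R) : conjc (cN * om ^+ m * p%:C * z) = cN * om ^+ (N.-1 * m) * p%:C * conjc z.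
Proof. by rewrite !conjcM' !conjc_real conj_omX. Qed.

Lemma exp_shift (a b i : 'I_N) k : om ^+ (N.-1 * (a * i)) * om ^+ (b * ((i + k) %% N)) = om ^+ (b * k) * om ^+ (i * (N.-1 * a + b)).
Proof.
rewrite -!exprD om_mod [RHS]om_mod; congr (om ^+ _).
rewrite -modnDmr modnMmr modnDmr; congr (_ %% N)%N; ring.
Qed.

Lemma cN2 : cN * cN * (N%:R : C) = 1.
Proof.
rewrite -!rmorphM /= -expr2 exprVn sqr_sqrtr ?ler0n //.
have -> : (N%:R : C) = (N%:R : R)%:C by rewrite rmorph_nat.
by rewrite -rmorphM /= mulVf ?Nne0.
Qed.

Lemma rk_formula k : autocorr (ofdm_symbol Pw s w) k =
  \sum_(a < N) (Pw a * cabs2 (s a w))%:C * om ^+ (k * a).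
Proof.
rewrite autocorr_shift.
under eq_bigr => i _ do rewrite !ofdm_entry conjc_sum' mulr_suml.
under eq_bigr do under eq_bigr do rewrite mulr_sumr.
rewrite exchange_big /=.
under eq_bigr do rewrite exchange_big /=.
apply: eq_bigr => a _.
have key : forall b : 'I_N,
  \sum_(i < N) (conjc (cN * om ^+ (a * i) * (Num.sqrt (Pw a))%:C * s a w) *
     (cN * om ^+ (b * ((i + k) %% N)) * (Num.sqrt (Pw b))%:C * s b w))
  = cN * cN * (Num.sqrt (Pw a))%:C * (Num.sqrt (Pw b))%:C * conjc (s a w) * s b w *
     (om ^+ (b * k) * \sum_(i < N) om ^+ (i * (N.-1 * a + b))).
  move=> b; rewrite mulr_sumr mulr_sumr; apply: eq_bigr => i _.
  rewrite conj_term /= -exp_shift; ring.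
rewrite (bigD1 a) //= [X in _ + X]big1 ?addr0 => [|b ba].
  rewrite key orth orth_idx eqxx.
  have -> : (Pw a * cabs2 (s a w))%:C = cN * cN * N%:R * ((Num.sqrt (Pw a))%:C * (Num.sqrt (Pw a))%:C) * (s a w * conjc (s a w)).
    by rewrite cN2 mul1r -rmorphM /= -expr2 sqr_sqrtr // rmorphM /= cabs2E.
  rewrite mulnC; ring.
by rewrite key orth orth_idx eq_sym (negbTE ba) !mulr0.
Qed.

Lemma sum_rk2 : \sum_(k < N) cabs2 (autocorr (ofdm_symbol Pw s w) k) =
  N%:R * \sum_(a < N) (Pw a * cabs2 (s a w)) ^+ 2.
Proof.
apply: complexI.
rewrite rmorphM rmorph_sum rmorph_sum /= rmorph_nat.
under eq_bigr => k _ do rewrite cabs2E rk_formula conjc_sum' mulr_suml.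
under eq_bigr => k _ do under eq_bigr => a _ do rewrite mulr_sumr.
rewrite exchange_big /=.
under eq_bigr => a _ do rewrite exchange_big /=.
rewrite mulr_sumr; apply: eq_bigr => a _.
have key : forall b : 'I_N,
  \sum_(k < N) ((Pw a * cabs2 (s a w))%:C * om ^+ (k * a) *
     conjc ((Pw b * cabs2 (s b w))%:C * om ^+ (k * b)))
  = (Pw a * cabs2 (s a w))%:C * (Pw b * cabs2 (s b w))%:C *
     \sum_(k < N) om ^+ (k * (N.-1 * b + a)).
  move=> b; rewrite mulr_sumr; apply: eq_bigr => k _.
  rewrite conjcM' conjc_real conj_omX.
  have -> : (k * (N.-1 * b + a) = k * a + N.-1 * (k * b))%N by ring.
  rewrite exprD; ring.
rewrite (bigD1 a) //= [X in _ + X]big1 ?addr0 => [|b ba].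
  by rewrite key orth orth_idx eqxx rmorphXn /=; ring.
by rewrite key orth orth_idx (negbTE ba) mulr0.
Qed.

Lemma cabs2_real (x : R) : cabs2 (x%:C) = x ^+ 2.
Proof. by rewrite /cabs2 /= expr0n /= addr0 sqr_sqrtr ?sqr_ge0. Qed.

Lemma pointwise : \sum_(1 <= k < N) cabs2 (autocorr (ofdm_symbol Pw s w) k)
  + (\sum_(a < N) Pw a * cabs2 (s a w)) ^+ 2
  = N%:R * \sum_(a < N) (Pw a * cabs2 (s a w)) ^+ 2.
Proof.
rewrite -sum_rk2 -(big_mkord xpredT (fun k => cabs2 (autocorr (ofdm_symbol Pw s w) k))).
rewrite (big_ltn N0) addrC; congr (_ + _).
rewrite rk_formula.
rewrite (eq_bigr (fun a : 'I_N => (Pw a * cabs2 (s a w))%:C)); last by move=> a _; rewrite mul0n expr0 mulr1.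
by rewrite -rmorph_sum cabs2_real.
Qed.
End alg.

Section helpers.
Context d (T : measurableType d) (R : realType) (P : probability T R).
Local Open Scope ereal_scope.

Lemma intD' (f g : T -> R) : measurable_fun setT f -> measurable_fun setT g ->
  (forall w, (0 <= f w)%R) -> (forall w, (0 <= g w)%R) ->
  \int[P]_w ((f w + g w)%R)%:E = \int[P]_w (f w)%:E + \int[P]_w (g w)%:E.
Proof.
move=> mf mg f0 g0; under eq_integral do rewrite EFinD.
by rewrite ge0_integralD //; [move=> w _; rewrite lee_fin|exact/measurable_EFinP|move=> w _; rewrite lee_fin|exact/measurable_EFinP].
Qed.

Lemma intZ' (k : R) (f : T -> R) : (0 <= k)%R -> measurable_fun setT f ->
  (forall w, (0 <= f w)%R) ->
  \int[P]_w ((k * f w)%R)%:E = k%:E * \int[P]_w (f w)%:E.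
Proof.
move=> k0 mf f0; under eq_integral do rewrite EFinM.
rewrite ge0_integralZl_EFin //; [move=> w _; rewrite lee_fin //|exact/measurable_EFinP].
Qed.

Lemma intsum' (I : Type) (r : seq I) (f : I -> T -> R) :
  (forall i, measurable_fun setT (f i)) -> (forall i w, (0 <= f i w)%R) ->
  \int[P]_w ((\sum_(i <- r) f i w)%R)%:E = \sum_(i <- r) \int[P]_w (f i w)%:E.
Proof.
move=> mf f0; under eq_integral do rewrite -sumEFin.
by rewrite ge0_integral_sum //; [move=> i; exact/measurable_EFinP|move=> i w _; rewrite lee_fin].
Qed.
End helpers.

Lemma cabs2_lin (R : realType) (N : nat) (v : 'I_N -> R) (c : 'I_N -> R[i]) :
  cabs2 (\sum_(a < N) (v a)%:C * c a) =
  (\sum_(a < N) v a * complex.Re (c a)) ^+ 2 + (\sum_(a < N) v a * complex.Im (c a)) ^+ 2.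
Proof.
rewrite cabs2_sel /selc /=; congr (_ ^+ 2 + _ ^+ 2).
  elim/big_rec2: _ => [//|a x y _ <-].
  by case: (c a) => p q; case: y => p2 q2 /=; rewrite mul0r subr0.
elim/big_rec2: _ => [//|a x y _ <-].
by case: (c a) => p q; case: y => p2 q2 /=; rewrite mul0r addr0.
Qed.

Local Close Scope complex_scope.
Local Close Scope classical_set_scope.

Theorem proposition1 (d : measure_display) (T : measurableType d) (R : realType)
  (P : probability T R) (N : nat) (s : 'I_N -> T -> R[i])
  (mu4 : 'I_N -> R) (Pw : 'I_N -> R) :
  (2 <= N)%N ->
  (forall n, measurable_fun setT (fun w => complex.Re (s n w))) ->
  (forall n, measurable_fun setT (fun w => complex.Im (s n w))) ->
  cindependent P s ->
  (forall n, 'E_P[(fun w => complex.Re (s n w))%R] = 0)%E ->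
  (forall n, 'E_P[(fun w => complex.Im (s n w))%R] = 0)%E ->
  (forall n, 'E_P[(fun w => cabs2 (s n w))%R] = 1)%E ->
  (forall n, 'E_P[(fun w => cabs2 (s n w) ^+ 2)%R] = (mu4 n)%:E)%E ->
  (forall n, 0 <= Pw n) ->
  ((\sum_(1 <= k < N)
       'E_P[(fun w => cabs2 (autocorr (ofdm_symbol Pw s w) k))%R])
     * ((N.-1%:R)^-1)%:E)%E
  = (((N.-1%:R)^-1) * (\sum_(n < N) ((N.-1%:R * mu4 n + 1) * Pw n ^+ 2)
       - (\sum_(n < N) Pw n) ^+ 2))%:E.
Proof.
move=> N2 mRe mIm ind ERe EIm Eu Eu2 P0.
have N0 : (0 < N)%N by apply: leq_trans N2.
have mu : forall n, measurable_fun setT (fun w => cabs2 (s n w)).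
  move=> n.
  have -> : (fun w => cabs2 (s n w)) = (fun w => selc true (s n w) ^+ 2 + selc false (s n w) ^+ 2)
    by apply/funext => w; rewrite cabs2_sel.
  by apply: measurable_funD; apply: measurable_funX; exact: msel.
have u0 : forall n w, 0 <= cabs2 (s n w).
  by move=> n w; rewrite cabs2_sel addr_ge0 // sqr_ge0.
have mr : forall k, measurable_fun setT (fun w => cabs2 (autocorr (ofdm_symbol Pw s w) k)).
  move=> k.
  have -> : (fun w => cabs2 (autocorr (ofdm_symbol Pw s w) k)) =
     (fun w => (\sum_(a < N) (Pw a * cabs2 (s a w)) * complex.Re (expj (2 * pi / (N%:R : R)) ^+ (k * a))) ^+ 2
             + (\sum_(a < N) (Pw a * cabs2 (s a w)) * complex.Im (expj (2 * pi / (N%:R : R)) ^+ (k * a))) ^+ 2).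
    by apply/funext => w; rewrite (@rk_formula R N N0 d T Pw s w P0) cabs2_lin.
  by apply: measurable_funD; apply: measurable_funX; apply: measurable_sum => a; apply: measurable_funM; try exact: measurable_cst; apply: measurable_funM; try exact: measurable_cst; exact: mu.
have r0 : forall k w, 0 <= cabs2 (autocorr (ofdm_symbol Pw s w) k).
  by move=> k w; rewrite cabs2_sel addr_ge0 // sqr_ge0.
pose G w := \sum_(1 <= k < N) cabs2 (autocorr (ofdm_symbol Pw s w) k).
pose S w := \sum_(a < N) Pw a * cabs2 (s a w).
pose Hs w := \sum_(a < N) (N%:R * Pw a ^+ 2) * cabs2 (s a w) ^+ 2.
pose Hval := \sum_(a < N) (N%:R * Pw a ^+ 2) * mu4 a.
pose Q := \sum_(a < N) \sum_(b < N) (Pw a * Pw b) * (if a == b then mu4 a else 1).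
have EG : (\sum_(1 <= k < N) 'E_P[(fun w => cabs2 (autocorr (ofdm_symbol Pw s w) k))%R])%E
    = (\int[P]_w (G w)%:E)%E.
  by rewrite /G intsum' //; apply: eq_bigr => k _; rewrite expectation.unlock.
have mG : measurable_fun setT G by apply: measurable_sum.
have G0 : forall w, 0 <= G w by move=> w; rewrite /G sumr_ge0.
have mS2 : measurable_fun setT (fun w => S w ^+ 2).
  by apply: measurable_funX; apply: measurable_sum => a; apply: measurable_funM; [exact: measurable_cst|exact: mu].
have ES : (\int[P]_w ((S w ^+ 2)%R)%:E)%E = Q%:E.
  have Sexp : forall w, S w ^+ 2 = \sum_(a < N) \sum_(b < N) (Pw a * Pw b) * (cabs2 (s a w) * cabs2 (s b w)).
    move=> w; rewrite /S expr2 mulr_suml; apply: eq_bigr => a _.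
    by rewrite mulr_sumr; apply: eq_bigr => b _; ring.
  under eq_integral => w _ do rewrite Sexp.
  rewrite intsum'; first last.
  - by move=> a w; apply: sumr_ge0 => b _; do 2 apply: mulr_ge0 => //.
  - by move=> a; apply: measurable_sum => b; apply: measurable_funM; [exact: measurable_cst|apply: measurable_funM; exact: mu].
  rewrite /Q -sumEFin; apply: eq_bigr => a _.
  rewrite intsum'; first last.
  - by move=> b w; do 2 apply: mulr_ge0 => //.
  - by move=> b; apply: measurable_funM; [exact: measurable_cst|apply: measurable_funM; exact: mu].
  rewrite -sumEFin; apply: eq_bigr => b _.
  rewrite intZ'; first last.
  - by move=> w; apply: mulr_ge0.
  - by apply: measurable_funM; exact: mu.
  - by apply: mulr_ge0.
  rewrite [RHS]EFinM; congr (_ * _)%E.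
  case: eqP => [<-|/eqP ab].
    by rewrite -(Eu2 a) expectation.unlock; under eq_integral do rewrite -expr2.
  exact: E_uab.
have EH : (\int[P]_w (Hs w)%:E)%E = Hval%:E.
  rewrite /Hs intsum'; first last.
  - by move=> a w; apply: mulr_ge0; [apply: mulr_ge0; [exact: ler0n|exact: sqr_ge0]|exact: sqr_ge0].
  - by move=> a; apply: measurable_funM; [exact: measurable_cst|apply: measurable_funX; exact: mu].
  rewrite /Hval -sumEFin; apply: eq_bigr => a _.
  rewrite intZ'; first last.
  - by move=> w; rewrite sqr_ge0.
  - by apply: measurable_funX; exact: mu.
  - by apply: mulr_ge0; [exact: ler0n|exact: sqr_ge0].
  by rewrite [RHS]EFinM -(Eu2 a) expectation.unlock.
have Esum : (\int[P]_w (G w)%:E + Q%:E)%E = Hval%:E.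
  rewrite -ES -EH -intD' //; last by move=> w; rewrite sqr_ge0.
  apply: eq_integral => w _; congr EFin.
  rewrite /G /S (@pointwise R N N0 d T Pw s w P0) /Hs mulr_sumr; apply: eq_bigr => a _.
  by rewrite exprMn; ring.
have EIG : (\int[P]_w (G w)%:E)%E = (Hval - Q)%:E.
  by rewrite EFinB -Esum addeK.
rewrite EG EIG -EFinM; congr EFin.
have Nm1 : (N.-1%:R : R) = N%:R - 1 by rewrite -subn1 natrB.
have Qeq : Q = \sum_(a < N) Pw a ^+ 2 * (mu4 a - 1) + (\sum_(n < N) Pw n) ^+ 2.
  rewrite expr2 mulr_suml -big_split /Q; apply: eq_bigr => a _.
  rewrite mulr_sumr (bigD1 a) //= (bigD1 a (P:= xpredT)) //= eqxx addrA; congr (_ + _).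
    by ring.
  apply: eq_bigr => b ba; rewrite eq_sym (negbTE ba); ring.
rewrite Qeq mulrC; congr (_ * _).
rewrite opprD addrA; congr (_ - _).
rewrite /Hval -sumrB; apply: eq_bigr => a _; rewrite Nm1; ring.
Qed.
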